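(* $\mathfrak{L}(\mathrm{rtDBVA}(1))=\mathfrak{L}(\mathrm{1DFAMW})$.
   Context: $\mathfrak{L}(A)$ denotes the class of languages recognized by machines of type $A$. A real-time deterministic blind vector automaton of dimension $k$ ($\mathrm{rtDBVA}(k)$) is a 6-tuple $(Q,\Sigma,\delta,q_0,Q_a,v)$ with finite state set $Q$, initial state $q_0$, accept states $Q_a$, initial row vector $v\in\mathbb{Q}^k$ (freely chosen), and $\delta:Q\times(\Sigma\cup\{\cent,\$\})\to Q\times S$, $S$ the set of $k\times k$ rational matrices; the input $w$ is read as $\cent w\$$ left to right, one symbol per step, and $\delta(q,\sigma)=(q',M)$ means that in state $q$ reading $\sigma$ the machine goes to $q'$ and multiplies its row vector on the right by $M$. The input is accepted iff after processing $\$$ the state is in $Q_a$ and the first vector entry equals $1$. A one-way deterministic finite automaton with multiplication without equality (1DFAMW) is a 6-tuple $(Q,\Sigma,\delta,q_0,Q_a,\Gamma)$ with $\Gamma$ a finite set of rationals and a rational register initially $1$; the tape holds $\cent w\$$; $\delta:Q\times(\Sigma\cup\{\cent,\$\})\to Q\times\{\downarrow,\rightarrow\}\times\Gamma$, and $\delta(q,\sigma)=(q',d,\gamma)$ means that in state $q$ reading $\sigma$ it goes to $q'$, keeps the head in place ($\downarrow$) or moves it one cell right ($\rightarrow$), and multiplies the register by $\gamma$. The input is accepted iff the machine enters an accept state with register value $1$ after scanning $\$$. *)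

(* Defs.v *)
From mathcomp Require Import all_boot all_order all_algebra.
Set Implicit Arguments. Unset Strict Implicit. Unset Printing Implicit Defensive.
Import GRing.Theory Num.Theory.
Local Open Scope ring_scope.

Inductive tsym (Sigma : Type) := Cent | Dollar | Sym of Sigma.
Arguments Cent {Sigma}. Arguments Dollar {Sigma}.

Definition tape (Sigma : Type) (w : seq Sigma) : seq (tsym Sigma) :=
  Cent :: rcons (map (@Sym Sigma) w) Dollar.

Record rtDBVA (Sigma : Type) (Q : finType) (k : nat) := RtDBVA {
  bva_delta : Q -> tsym Sigma -> Q * 'M[rat]_k;
  bva_q0 : Q;
  bva_acc : {set Q};
  bva_v : 'rV[rat]_k }.

Definition bva_step Sigma Q k (M : rtDBVA Sigma Q k)
  (c : Q * 'rV[rat]_k) (s : tsym Sigma) : Q * 'rV[rat]_k :=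
  let: (q, v) := c in let: (q', A) := bva_delta M q s in (q', v *m A).

Definition bva_run Sigma Q k (M : rtDBVA Sigma Q k) (w : seq Sigma) :=
  foldl (bva_step M) (bva_q0 M, bva_v M) (tape w).

Definition bva_accepts Sigma Q k (M : rtDBVA Sigma Q k) (w : seq Sigma) : Prop :=
  let: (q, v) := bva_run M w in
  q \in bva_acc M /\ exists i : 'I_k, nat_of_ord i = 0%N /\ v ord0 i = 1.

(* the bool component of a transition is the head move: false = stay, true = move right *)
Record DFAMW (Sigma : Type) (Q : finType) := Dfamw {
  fam_delta : Q -> tsym Sigma -> Q * bool * rat;
  fam_q0 : Q;
  fam_acc : {set Q};
  fam_gamma : seq rat;
  fam_gammaP : forall q s, (fam_delta q s).2 \in fam_gamma }.

(* configurations: (state, head position on the tape, register) *)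
Definition fam_step Sigma Q (M : DFAMW Sigma Q) (t : seq (tsym Sigma))
  (c : Q * nat * rat) : Q * nat * rat :=
  let: (q, p, r) := c in
  if (p < size t)%N then
    let: (q', d, g) := fam_delta M q (nth Cent t p) in (q', (p + d)%N, r * g)
  else c. (* head has moved past $: computation has halted *)

Definition fam_accepts Sigma Q (M : DFAMW Sigma Q) (w : seq Sigma) : Prop :=
  exists n : nat,
    let: (q, p, r) := iter n (fam_step M (tape w)) (fam_q0 M, 0%N, 1) in
    [/\ p = size (tape w), q \in fam_acc M & r = 1].

Definition in_L_rtDBVA (k : nat) (Sigma : finType) (L : seq Sigma -> Prop) : Prop :=
  exists (Q : finType) (M : rtDBVA Sigma Q k), forall w, L w <-> bva_accepts M w.

Definition in_L_1DFAMW (Sigma : finType) (L : seq Sigma -> Prop) : Prop :=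
  exists (Q : finType) (M : DFAMW Sigma Q), forall w, L w <-> fam_accepts M w.

(* Main.v *)
Require Import Defs.
From mathcomp Require Import all_boot all_order all_algebra.
From Stdlib Require Import ClassicalEpsilon.
Set Implicit Arguments. Unset Strict Implicit. Unset Printing Implicit Defensive.

Section Gen.
Import GRing.Theory.
Local Open Scope ring_scope.
Variable Sigma : finType.

Definition sstep Q (M : rtDBVA Sigma Q 1) (c : Q * rat) (s : tsym Sigma) : Q * rat :=
  let: (q, x) := c in ((bva_delta M q s).1, x * (bva_delta M q s).2 ord0 ord0).

Lemma srun Q (M : rtDBVA Sigma Q 1) s : forall q v,
  (foldl (bva_step M) (q, v) s).1 = (foldl (sstep M) (q, v ord0 ord0) s).1 /\
  (foldl (bva_step M) (q, v) s).2 ord0 ord0 = (foldl (sstep M) (q, v ord0 ord0) s).2.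
Proof.
elim: s => [|a s IH] q v //.
case E: (bva_delta M q a) => [q' A].
rewrite (_ : foldl (bva_step M) (q, v) (a :: s) = foldl (bva_step M) (q', v *m A) s);
  last by rewrite /= E.
rewrite (_ : foldl (sstep M) (q, v ord0 ord0) (a :: s) =
   foldl (sstep M) (q', v ord0 ord0 * A ord0 ord0) s); last by rewrite /= E.
have H : (v *m A) ord0 ord0 = v ord0 ord0 * A ord0 ord0.
  by rewrite !mxE big_ord1.
rewrite -H.
exact: IH.
Qed.

Lemma bva_acc_iff Q (M : rtDBVA Sigma Q 1) w :
  bva_accepts M w <->
  ((foldl (sstep M) (bva_q0 M, bva_v M ord0 ord0) (tape w)).1 \in bva_acc M /\
   (foldl (sstep M) (bva_q0 M, bva_v M ord0 ord0) (tape w)).2 = 1).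
Proof.
rewrite /bva_accepts /bva_run.
have [H1 H2] := srun M (tape w) (bva_q0 M) (bva_v M).
case E: foldl H1 H2 => [q v] /= H1 H2.
rewrite -H1 -H2; split.
  by case=> Hq [i [Hi Hv]]; split=> //; move: Hv; rewrite (ord1 i).
by case=> Hq Hv; split=> //; exists ord0.
Qed.

Definition fpos Q (c : Q * nat * rat) := c.1.2.

Lemma fix_end Q (M : DFAMW Sigma Q) t c n :
  (size t <= fpos c)%N -> iter n (fam_step M t) c = c.
Proof.
move=> H; elim: n => //= n ->.
case: c H => [[q p] r]; rewrite /fpos /= /fam_step => H.
by rewrite ltnNge H.
Qed.

Lemma step_mono Q (M : DFAMW Sigma Q) t c :
  (fpos c <= fpos (fam_step M t c))%N.
Proof.
case: c => [[q p] r]; rewrite /fpos /fam_step /=.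
case: ifP => // _.
by case: (fam_delta M q _) => [[q' d] g] /=; rewrite leq_addr.
Qed.

Lemma iter_mono Q (M : DFAMW Sigma Q) t c m j :
  (fpos (iter m (fam_step M t) c) <= fpos (iter (j + m) (fam_step M t) c))%N.
Proof.
elim: j => // j IH; rewrite addSn iterS.
exact: leq_trans IH (step_mono _ _ _).
Qed.

Lemma mono_le Q (M : DFAMW Sigma Q) t c m m' :
  (m <= m')%N ->
  (fpos (iter m (fam_step M t) c) <= fpos (iter m' (fam_step M t) c))%N.
Proof.
by move=> H; rewrite -(subnK H); apply: iter_mono.
Qed.

Lemma end_det Q (M : DFAMW Sigma Q) t c m m' :
  fpos (iter m (fam_step M t) c) = size t ->
  fpos (iter m' (fam_step M t) c) = size t ->
  iter m (fam_step M t) c = iter m' (fam_step M t) c.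
Proof.
wlog le: m m' / (m <= m')%N.
  move=> W H1 H2; case: (leqP m m') => h; first exact: W.
  by symmetry; apply: W => //; apply: ltnW.
move=> H1 _; rewrite -(subnK le) iterD (@fix_end _ M t (iter m (fam_step M t) c)) //.
by rewrite H1.
Qed.

End Gen.

Lemma drop_cons_facts (T : Type) (t : seq T) p a s x0 :
  drop p t = a :: s -> [/\ (p < size t)%N, nth x0 t p = a & drop p.+1 t = s].
Proof.
move=> H; split.
have := congr1 size H; rewrite size_drop /= => E.
  by rewrite -subn_gt0 E.
by rewrite -[p]addn0 -nth_drop H.
by rewrite -[p.+1]/(1 + p)%N -drop_drop H /= drop0.
Qed.

Definition code (Sigma : Type) (x : option (option Sigma)) : tsym Sigma :=
  match x with None => Cent | Some None => Dollar | Some (Some a) => Sym a end.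
Definition decode (Sigma : Type) (s : tsym Sigma) : option (option Sigma) :=
  match s with Cent => None | Dollar => Some None | Sym a => Some (Some a) end.
Lemma codeK (Sigma : Type) : cancel (@decode Sigma) (@code Sigma).
Proof. by case. Qed.

Section Dir1.
Import GRing.Theory.
Local Open Scope ring_scope.
Variables (Sigma Q : finType) (M : rtDBVA Sigma Q 1).

Definition v0 := bva_v M ord0 ord0.
Definition mult q (s : tsym Sigma) :=
  (bva_delta M q s).2 ord0 ord0 * (if s is Cent then v0 else 1).
Definition fdelta q s := ((bva_delta M q s).1, true, mult q s).
Definition gamma1 := [seq mult x.1 (code x.2) | x <- enum {: Q * option (option Sigma)}].
Lemma gamma1P q s : (fdelta q s).2 \in gamma1.
Proof.
rewrite /= -{1}(codeK s).
exact: (map_f (fun x : Q * option (option Sigma) => mult x.1 (code x.2)) (mem_enum _ (q, decode s))).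
Qed.
Definition FM := @Dfamw Sigma Q fdelta (bva_q0 M) (bva_acc M) gamma1 gamma1P.

Definition gstep (c : Q * rat) (s : tsym Sigma) :=
  let: (q, x) := c in ((bva_delta M q s).1, x * mult q s).

Lemma simA t s : forall p q r, drop p t = s ->
  iter (size s) (fam_step FM t) (q, p, r) =
  (let: (q', x) := foldl gstep (q, r) s in (q', (p + size s)%N, x)).
Proof.
elim: s => [|a s IH] p q r H; first by rewrite /= addn0.
have [Hp Hn Hd] := drop_cons_facts Cent H.
rewrite [size _]/= iterSr.
have -> : fam_step FM t (q, p, r) = ((bva_delta M q a).1, p.+1, r * mult q a).
  by rewrite /fam_step Hp Hn /= addn1.
rewrite IH //.
have -> : foldl gstep (q, r) (a :: s) = foldl gstep ((bva_delta M q a).1, r * mult q a) s by [].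
case: foldl => q' x; by rewrite addSnnS.
Qed.

Lemma g_s_eq l c : foldl gstep c (rcons (map (@Sym Sigma) l) Dollar) =
   foldl (sstep M) c (rcons (map (@Sym Sigma) l) Dollar).
Proof.
elim: l c => [|a l IH] [q x] /=; first by rewrite /gstep /sstep /mult mulr1.
rewrite -IH; congr foldl; by rewrite /gstep /sstep /mult mulr1.
Qed.

Lemma FM_acc w : fam_accepts FM w <-> bva_accepts M w.
Proof.
rewrite bva_acc_iff.
have HA := @simA (tape w) (tape w) 0 (bva_q0 M) 1 (drop0 _).
have Hg : foldl gstep (bva_q0 M, 1) (tape w) = foldl (sstep M) (bva_q0 M, v0) (tape w).
  rewrite /tape /= g_s_eq /gstep /sstep /mult /= mul1r mulrC //.
rewrite Hg in HA; rewrite -/v0.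
case E: (foldl (sstep M) (bva_q0 M, v0) (tape w)) HA => [q' x] HA.
split.
case=> n; case En: (iter n _ _) => [[q p] r] /= [Hp Hq Hr].
  have := @end_det _ _ FM (tape w) (bva_q0 M, 0%N, 1) n (size (tape w)).
  rewrite En HA /fpos /= Hp add0n => /(_ erefl erefl) [Eq Er].
  by subst.
move=> /= [Hq Hx]; exists (size (tape w)); by rewrite HA.
Qed.

End Dir1.

Section Dir2.
Import GRing.Theory.
Local Open Scope ring_scope.
Variables (Sigma Q : finType) (M : DFAMW Sigma Q).

Fixpoint chain (q : Q) (s : tsym Sigma) (i : nat) : Q :=
  match i with 0%N => q | i'.+1 => (fam_delta M (chain q s i') s).1.1 end.
Fixpoint prodc (q : Q) (s : tsym Sigma) (i : nat) : rat :=
  match i with 0%N => 1 | i'.+1 => prodc q s i' * (fam_delta M (chain q s i') s).2 end.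
Definition moves q s i : bool := (fam_delta M (chain q s i) s).1.2.

Definition clos q s : option (Q * rat) :=
  match excluded_middle_informative (exists i, moves q s i) with
  | left H => Some ((fam_delta M (chain q s (ex_minn H)) s).1.1,
                    prodc q s (ex_minn H) * (fam_delta M (chain q s (ex_minn H)) s).2)
  | right _ => None
  end.

Lemma stay t p q r s : (p < size t)%N -> nth Cent t p = s ->
  forall j, (forall l, (l < j)%N -> ~~ moves q s l) ->
  iter j (fam_step M t) (q, p, r) = (chain q s j, p, r * prodc q s j).
Proof.
move=> Hp Hn; elim=> [|j IH] Hm; first by rewrite /= mulr1.
rewrite iterS IH; last by move=> l hl; apply: Hm; apply: ltnW.
rewrite /fam_step Hp Hn.
case E: (fam_delta M (chain q s j) s) => [[q'' d] g].
have := Hm j (ltnSn j); rewrite /moves E /= => /negbTE ->.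
by rewrite E /= addn0 mulrA.
Qed.

Lemma clos_some t p q r s q' g : (p < size t)%N -> nth Cent t p = s ->
  clos q s = Some (q', g) ->
  exists m, iter m (fam_step M t) (q, p, r) = (q', p.+1, r * g).
Proof.
move=> Hp Hn; rewrite /clos; case: excluded_middle_informative => // H.
case: ex_minnP => i Hi Hmin [<- <-].
exists i.+1; rewrite iterS (stay r Hp Hn); last first.
  by move=> l hl; apply/negP => /Hmin; rewrite leqNgt hl.
rewrite /fam_step Hp Hn.
move: Hi; rewrite /moves.
case: (fam_delta M (chain q s i) s) => [[q'' d] g'] /= ->.
by rewrite addn1 mulrA.
Qed.

Lemma clos_none t p q r s : (p < size t)%N -> nth Cent t p = s ->
  clos q s = None ->
  forall j, fpos (iter j (fam_step M t) (q, p, r)) = p.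
Proof.
move=> Hp Hn; rewrite /clos; case: excluded_middle_informative => // H _ j.
rewrite (stay r Hp Hn) // => l _; apply/negP => Hl; apply: H; by exists l.
Qed.

Definition bdelta (o : option Q) (s : tsym Sigma) : option Q * 'M[rat]_1 :=
  match o with
  | Some q => match clos q s with Some (q', g) => (Some q', g%:M) | None => (None, 1%:M) end
  | None => (None, 1%:M)
  end.

Definition BM := @RtDBVA Sigma (option Q) 1 bdelta (Some (fam_q0 M))
  [set o : option Q | if o is Some q then q \in fam_acc M else false] 1%:M.

Lemma sstepE o x s : sstep BM (o, x) s =
  match o with
  | Some q => match clos q s with Some (q', g) => (Some q', x * g) | None => (None, x) end
  | None => (None, x)
  end.
Proof.
rewrite /sstep /=; case: o => [q|]; last by rewrite /= mxE /= mulr1.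
rewrite /bdelta; case: clos => [[q' g]|]; by rewrite /= mxE /= ?mulr1.
Qed.

Definition Inv t p (c : option Q * rat) : Prop :=
  match c.1 with
  | Some q => exists m, iter m (fam_step M t) (fam_q0 M, 0%N, 1 : rat) = (q, p, c.2)
  | None => forall m, (fpos (iter m (fam_step M t) (fam_q0 M, 0%N, 1 : rat)) < size t)%N
  end.

Lemma main t s : forall p c, drop p t = s -> Inv t p c ->
  Inv t (p + size s)%N (foldl (sstep BM) c s).
Proof.
elim: s => [|a s IH] p [o x] H HI; first by rewrite addn0.
have [Hp Hn Hd] := drop_cons_facts Cent H.
have -> : foldl (sstep BM) (o, x) (a :: s) = foldl (sstep BM) (sstep BM (o, x) a) s by [].
rewrite [size _]/= -addSnnS.
apply: IH => //.
rewrite sstepE.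
case: o HI => [q|] HI; last by [].
case: HI => m Hm.
case Ec: (clos q a) => [[q' g]|].
  have [m1 Hm1] := clos_some x Hp Hn Ec.
  by exists (m1 + m)%N; rewrite iterD Hm.
move=> m'; case: (leqP m' m) => hm.
  apply: leq_ltn_trans (mono_le _ _ _ hm) _; by rewrite Hm.
rewrite -(subnK (ltnW hm)) iterD Hm (clos_none x Hp Hn Ec) //.
Qed.

Lemma BM_acc w : bva_accepts BM w <-> fam_accepts M w.
Proof.
rewrite bva_acc_iff.
have HI : Inv (tape w) 0 (bva_q0 BM, bva_v BM ord0 ord0).
  by exists 0%N; rewrite /= mxE.
have := main (drop0 (tape w)) HI; rewrite add0n.
case: foldl => o x; rewrite /Inv /= => HJ.
split.
  case: o HJ => [q|] HJ; last by rewrite inE => -[].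
  case: HJ => m Hm; rewrite inE => -[Hq Hx]; subst x; exists m; by rewrite Hm.
case=> n; case En: (iter n _ _) => [[q p] r] [Hp Hq Hr].
case: o HJ => [q'|] HJ; last first.
  by have := HJ n; rewrite En /fpos /= Hp ltnn.
case: HJ => m Hm.
have := @end_det _ _ M (tape w) (fam_q0 M, 0%N, 1 : rat) n m.
rewrite En Hm /fpos /= Hp => /(_ erefl erefl) [Eq Er].
by subst; rewrite inE.
Qed.

End Dir2.

Theorem theorem9 (Sigma : finType) (L : seq Sigma -> Prop) :
  in_L_rtDBVA 1 L <-> in_L_1DFAMW L.
Proof.
split.
  case=> Q [M HM]; exists Q, (FM M) => w; rewrite HM; symmetry; exact: FM_acc.
case=> Q [M HM]; exists (option Q), (BM M) => w; rewrite HM; symmetry; exact: BM_acc.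
Qed.
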